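(* There exist absolute constants $A, C > 0$ such that for all integers $1 \le k \le d$, the Greedy algorithm (defined in the context), viewed as a map $c$ sending each finite point set $P \subset \mathbb{R}^d$ to its output $c(P)$, is an $\alpha$-composable core-set of size $k$ for the determinant maximization problem with parameter $k$, where $\alpha = A\cdot C^{k^2}$. That is, $|c(P)|\le k$ for every $P$, and for every integer $m \ge 1$ and all finite point sets $P_1,\dots,P_m \subset \mathbb{R}^d$, $$\mathrm{MAXDET}_k\Big(\bigcup_{i=1}^m c(P_i)\Big) \ge \frac{1}{\alpha}\,\mathrm{MAXDET}_k\Big(\bigcup_{i=1}^m P_i\Big).$$
   Context: For a finite set $S=\{v_1,\dots,v_k\}\subset\mathbb{R}^d$, let $M_S$ be the $k\times d$ matrix whose rows are the points of $S$; $\det(M_SM_S^\top)$ equals the square of the $k$-dimensional volume $\mathrm{VOL}(S)$ of the parallelepiped spanned by $S$. For a finite $P\subset\mathbb{R}^d$, $\mathrm{MAXDET}_k(P)=\max_{S\subseteq P,\,|S|=k}\det(M_SM_S^\top)$. For a set $C$ of points, $\langle C\rangle$ denotes its linear span, and $\mathrm{dist}(p,\mathcal{H})$ is the Euclidean distance from point $p$ to subspace $\mathcal{H}$. The Greedy algorithm on input $P$ and $k$: start with $\mathcal{C}=\emptyset$; for $k$ iterations, add to $\mathcal{C}$ a point $\arg\max_{p\in P}\mathrm{dist}(p,\langle\mathcal{C}\rangle)$; output $\mathcal{C}$. A map $c$ from point sets to subsets of themselves is an $\alpha$-composable core-set for determinant maximization if the displayed inequality holds for every collection $P_1,\dots,P_m$;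 it has size $t$ if $|c(P)|\le t$ for all $P$. *)

(* Defs.v *)
From HB Require Import structures.
From mathcomp Require Import all_boot all_order all_algebra.
From mathcomp Require Import boolp classical_sets reals Rstruct.
From Stdlib Require Rdefinitions.
Set Implicit Arguments. Unset Strict Implicit. Unset Printing Implicit Defensive.
Import Order.TTheory GRing.Theory Num.Theory.
Local Open Scope ring_scope.
Local Open Scope classical_set_scope.

Notation R := Rdefinitions.R.
Notation pt d := ('rV[R]_d).

Definition eucl_norm d (v : pt d) : R := Num.sqrt (\sum_(j < d) v 0 j ^+ 2).

Definition mx_of d (S : seq (pt d)) : 'M[R]_(size S, d) :=
  \matrix_(i < size S, j < d) (nth 0 S i) 0 j.

Definition dist d (p : pt d) (C : seq (pt d)) : R :=
  inf [set eucl_norm (p - v) | v in [set v : pt d | (v <= mx_of C)%MS]].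

(* s is a possible output sequence of Greedy on input P and k (with
   arbitrary tie-breaking): at step i, the point s_i belongs to P and
   maximizes dist(., <{s_0,...,s_(i-1)}>) over P.  If P is empty, the
   argmax is undefined and the output is empty. *)
Definition is_greedy d (P : seq (pt d)) (k : nat) (s : seq (pt d)) : Prop :=
  size s = (if P is [::] then 0%N else k) /\
  forall i : nat, (i < size s)%N ->
    nth 0 s i \in P /\
    forall q, q \in P -> dist q (take i s) <= dist (nth 0 s i) (take i s).

(* MAXDET_k(P) = max over k-element subsets S of P of det(M_S M_S^T);
   subsets of the (finite) point set P are encoded by injective maps
   'I_k -> indices of undup P.  Empty max (fewer than k points) is 0. *)
Definition MAXDET d (k : nat) (P : seq (pt d)) : R :=
  let s := undup P in
  \big[Num.max/0]_(f : {ffun 'I_k -> 'I_(size s)} | injectiveb f)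
     \det ((\matrix_(i < k, j < d) (nth 0 s (f i)) 0 j) *m
           (\matrix_(i < k, j < d) (nth 0 s (f i)) 0 j)^T).

(* Main.v *)
Require Import Defs.
From mathcomp Require Import all_boot all_order all_algebra.
From mathcomp Require Import boolp classical_sets reals Rstruct.
From Stdlib Require Rdefinitions.
Import Order.TTheory GRing.Theory Num.Theory.
Local Open Scope ring_scope.
Set Warnings "-notation-overridden,-ambiguous-paths".
From mathcomp Require Import ring lra zify.
Set Implicit Arguments. Unset Strict Implicit. Unset Printing Implicit Defensive.

Section Basics.
Variable d : nat.
Implicit Types x y u v r : 'rV[R]_d.

Definition dot x y : R := (x *m y^T) 0 0.
Definition sq x := dot x x.

Lemma dotE x y : dot x y = \sum_j x 0 j * y 0 j.
Proof. by rewrite /dot mxE; apply: eq_bigr => j _; rewrite mxE. Qed.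

Lemma dotC x y : dot x y = dot y x.
Proof. by rewrite !dotE; apply: eq_bigr => j _; rewrite mulrC. Qed.

Lemma dotDl x y z : dot (x + y) z = dot x z + dot y z.
Proof. by rewrite /dot mulmxDl mxE. Qed.

Lemma dotZl a x z : dot (a *: x) z = a * dot x z.
Proof. by rewrite /dot -scalemxAl mxE. Qed.

Lemma dotNl x z : dot (- x) z = - dot x z.
Proof. by rewrite -scaleN1r dotZl mulN1r. Qed.

Lemma dotBl x y z : dot (x - y) z = dot x z - dot y z.
Proof. by rewrite dotDl dotNl. Qed.

Lemma dotDr x y z : dot z (x + y) = dot z x + dot z y.
Proof. by rewrite dotC dotDl !(dotC z). Qed.

Lemma dotZr a x z : dot z (a *: x) = a * dot z x.
Proof. by rewrite dotC dotZl dotC. Qed.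

Lemma dotBr x y z : dot z (x - y) = dot z x - dot z y.
Proof. by rewrite dotC dotBl !(dotC z). Qed.

Lemma dot0l z : dot 0 z = 0.
Proof. by rewrite /dot mul0mx mxE. Qed.

Lemma dot0r z : dot z 0 = 0.
Proof. by rewrite dotC dot0l. Qed.

Lemma sq_ge0 x : 0 <= sq x.
Proof. by rewrite /sq dotE; apply: sumr_ge0 => j _; rewrite -expr2 sqr_ge0. Qed.

Lemma sq_eq0 x : sq x = 0 -> x = 0.
Proof.
rewrite /sq dotE => /eqP; rewrite psumr_eq0 => [/allP H|j _]; last by rewrite -expr2 sqr_ge0.
apply/rowP => j; rewrite mxE; have := H j (mem_index_enum j).
by rewrite /= -expr2 sqrf_eq0 => /eqP.
Qed.

Lemma sqD x y : sq (x + y) = sq x + 2 * dot x y + sq y.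
Proof. rewrite /sq !dotDl !dotDr (dotC y x); ring. Qed.

Lemma sqB x y : sq (x - y) = sq x - 2 * dot x y + sq y.
Proof. rewrite /sq !dotBl !dotBr (dotC y x); ring. Qed.

Lemma sqZ a x : sq (a *: x) = a ^+ 2 * sq x.
Proof. by rewrite /sq dotZl dotZr mulrA expr2. Qed.

Lemma eucl_normE x : eucl_norm x = Num.sqrt (sq x).
Proof. by rewrite /eucl_norm /sq dotE; congr Num.sqrt; apply: eq_bigr => j _; rewrite expr2. Qed.

Lemma dot_mul_sub n x (A : 'M[R]_(n, d)) v :
  x *m A^T = 0 -> (v <= A)%MS -> dot x v = 0.
Proof.
move=> xA /submxP [w ->]; rewrite /dot trmx_mul mulmxA xA mul0mx mxE //.
Qed.

End Basics.

Lemma zmod_id1 (V : zmodType) (x r q : V) : r - q = (x - q) - (x - r).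
Proof. by rewrite opprB [X in _ = X]addrC addrA subrK. Qed.

Lemma submx_sub m1 m2 n (A B : 'M[R]_(m1, n)) (C : 'M_(m2, n)) :
  (A <= C)%MS -> (B <= C)%MS -> ((A - B)%R <= C)%MS.
Proof.
move=> AC BC; apply: addmx_sub => //.
by rewrite -scaleN1r scalemx_sub.
Qed.

Lemma zmod_id2 (V : zmodType) (x v q : V) : x - v = q + ((x - q) - v).
Proof. by rewrite addrA [q + _]addrC subrK. Qed.
Lemma zmod_id3 (V : zmodType) (x q : V) : x - (x - q) = q.
Proof. by rewrite opprB addrC subrK. Qed.

Lemma zmod_id4 (V : zmodType) (x y z : V) : x - (y - z) = (x - y) + z.
Proof. by rewrite opprB addrCA addrC. Qed.
Lemma zmod_id5 (V : zmodType) (x u : V) : x = u + (x - u).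
Proof. by rewrite addrC subrK. Qed.

Section Resid.
Variable d : nat.
Implicit Types x y u v r : 'rV[R]_d.

Lemma gram_sub n (A : 'M[R]_(n, d)) : (A^T <= A *m A^T)%MS.
Proof.
have K0 : (A :&: kermx A^T)%MS == 0.
  apply/rowV0P => v /[dup] vK; rewrite sub_capmx => /andP [vA /sub_kermxP vker].
  apply: sq_eq0; exact: dot_mul_sub vker vA.
rewrite -mxrank_eq0 in K0.
have Hr : \rank (A *m A^T) = \rank A^T.
  by rewrite mxrank_tr; have := mxrank_mul_ker A A^T; rewrite (eqP K0) addn0.
have := mxrank_leqif_sup (submxMl A A^T).
by rewrite Hr => -[_]; rewrite eqxx.
Qed.

Definition resid n x (A : 'M[R]_(n, d)) : 'rV_d :=
  locked (x - x *m A^T *m pinvmx (A *m A^T) *m A).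
Lemma residE n x (A : 'M[R]_(n, d)) :
  resid x A = x - x *m A^T *m pinvmx (A *m A^T) *m A.
Proof. by rewrite /resid -lock. Qed.

Lemma resid_sub n x (A : 'M[R]_(n, d)) : (x - resid x A <= A)%MS.
Proof. by rewrite residE opprB addrC subrK submxMl. Qed.

Lemma resid_orth n x (A : 'M[R]_(n, d)) : resid x A *m A^T = 0.
Proof.
rewrite residE mulmxBl -[X in _ - X]mulmxA mulmxKpV ?subrr //.
exact: submx_trans (submxMl _ _) (gram_sub A).
Qed.

Lemma resid_dot n x (A : 'M[R]_(n, d)) v : (v <= A)%MS -> dot (resid x A) v = 0.
Proof. exact/dot_mul_sub/resid_orth. Qed.

Lemma resid_uniq n x r (A : 'M[R]_(n, d)) :
  (x - r <= A)%MS -> r *m A^T = 0 -> r = resid x A.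
Proof.
move=> xr rA; apply/eqP; rewrite -subr_eq0; apply/eqP/sq_eq0.
have eA : (r - resid x A <= A)%MS.
  have -> : r - resid x A = (x - resid x A) - (x - r).
    by rewrite (zmod_id1 x).
  by rewrite submx_sub // resid_sub.
rewrite /sq dotBl (dot_mul_sub rA eA) (resid_dot _ eA) subrr //.
Qed.

Lemma residD n x y (A : 'M[R]_(n, d)) : resid (x + y) A = resid x A + resid y A.
Proof.
symmetry; apply: resid_uniq; last by rewrite mulmxDl !resid_orth addr0.
have -> : x + y - (resid x A + resid y A) = (x - resid x A) + (y - resid y A).
  by rewrite opprD addrACA.
by rewrite addmx_sub // resid_sub.
Qed.

Lemma residZ n a x (A : 'M[R]_(n, d)) : resid (a *: x) A = a *: resid x A.
Proof.
symmetry; apply: resid_uniq; last by rewrite -scalemxAl resid_orth scaler0.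
by rewrite -scalerBr scalemx_sub // resid_sub.
Qed.

Lemma residN n x (A : 'M[R]_(n, d)) : resid (- x) A = - resid x A.
Proof. by rewrite -scaleN1r residZ scaleN1r. Qed.

Lemma residB n x y (A : 'M[R]_(n, d)) : resid (x - y) A = resid x A - resid y A.
Proof. by rewrite residD residN. Qed.

Lemma resid0 n x (A : 'M[R]_(n, d)) : (x <= A)%MS -> resid x A = 0.
Proof.
move=> xA; symmetry; apply: resid_uniq; first by rewrite subr0.
by rewrite mul0mx.
Qed.

Lemma resid_id n x (A : 'M[R]_(n, d)) : x *m A^T = 0 -> resid x A = x.
Proof. by move=> xA; symmetry; apply: resid_uniq => //; rewrite subrr sub0mx. Qed.

Lemma resid_sum n (A : 'M[R]_(n, d)) (I : Type) (s : seq I) (F : I -> 'rV_d) :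
  resid (\sum_(i <- s) F i) A = \sum_(i <- s) resid (F i) A.
Proof.
elim: s => [|a s IH]; first by rewrite !big_nil resid0 // sub0mx.
by rewrite !big_cons residD IH.
Qed.

Lemma pyth r h : dot r h = 0 -> sq (r + h) = sq r + sq h.
Proof. by move=> rh; rewrite sqD rh mulr0 addr0. Qed.

Lemma sq_resid_le n x (A : 'M[R]_(n, d)) v : (v <= A)%MS ->
  sq (resid x A) <= sq (x - v).
Proof.
move=> vA.
rewrite (zmod_id2 x v (resid x A)).
rewrite (pyth (r:=resid x A)); first by rewrite lerDl sq_ge0.
by apply: resid_dot; rewrite submx_sub // resid_sub.
Qed.

Lemma sq_resid_le_x n x (A : 'M[R]_(n, d)) : sq (resid x A) <= sq x.
Proof. by have := @sq_resid_le n x A 0; rewrite subr0; apply; rewrite sub0mx. Qed.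

Local Open Scope classical_set_scope.
Lemma inf_resid n x (A : 'M[R]_(n, d)) :
  inf [set eucl_norm (x - v) | v in [set v : 'rV[R]_d | (v <= A)%MS]] =
  eucl_norm (resid x A).
Proof.
set E := (X in inf X = _).
have lb : lbound E (eucl_norm (resid x A)).
  move=> _ [v vA <-]; rewrite !eucl_normE; apply: ler_wsqrtr.
  exact: sq_resid_le.
have inE : E (eucl_norm (resid x A)).
  exists (x - resid x A); first exact: resid_sub.
  by rewrite zmod_id3.
apply/le_anti/andP; split.
  by apply: ge_inf => //; exists (eucl_norm (resid x A)).
by apply: lb_le_inf => //; exists (eucl_norm (resid x A)).
Qed.

Lemma distE x (s : seq 'rV[R]_d) : dist x s = eucl_norm (resid x (mx_of s)).
Proof. exact: inf_resid. Qed.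

Lemma sq_resid_mono m n x (A : 'M[R]_(m, d)) (B : 'M[R]_(n, d)) :
  (A <= B)%MS -> sq (resid x B) <= sq (resid x A).
Proof.
move=> AB.
have := @sq_resid_le n x B (x - resid x A).
rewrite zmod_id3; apply; apply: submx_trans AB; exact: resid_sub.
Qed.

Lemma cauchy_schwarz x y : dot x y ^+ 2 <= sq x * sq y.
Proof.
have [y0|yn0] := eqVneq (sq y) 0.
  by rewrite (sq_eq0 y0) /sq !dot0r expr0n mulr0.
have := sq_ge0 (sq y *: x - dot x y *: y).
rewrite sqB !sqZ dotZl dotZr /sq => H.
have hy : 0 < dot y y by rewrite lt_def yn0 sq_ge0.
rewrite -(@ler_pM2r _ (dot y y)) //.
nra.
Qed.

End Resid.

Section Norm.
Variable d : nat.
Implicit Types x y u v r : 'rV[R]_d.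

Definition N x : R := Num.sqrt (sq x).

Lemma N_ge0 x : 0 <= N x.
Proof. exact: sqrtr_ge0. Qed.

Lemma N_sqr x : N x ^+ 2 = sq x.
Proof. by rewrite sqr_sqrtr // sq_ge0. Qed.

Lemma N_le x y : sq x <= sq y -> N x <= N y.
Proof. exact: ler_wsqrtr. Qed.

Lemma N_leE x y : (N x <= N y) = (sq x <= sq y).
Proof. by rewrite /N ler_sqrt // sq_ge0. Qed.

Lemma dot_le x y : `|dot x y| <= N x * N y.
Proof.
rewrite /N -sqrtrM ?sq_ge0 // -sqrtr_sqr; apply: ler_wsqrtr.
exact: cauchy_schwarz.
Qed.

Lemma N_triangle x y : N (x + y) <= N x + N y.
Proof.
have h0 : 0 <= N x + N y by rewrite addr_ge0 ?N_ge0.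
have H2 : dot x y <= N x * N y by apply: le_trans (ler_norm _) (dot_le x y).
rewrite {1}/N -[X in _ <= X]ger0_norm // -sqrtr_sqr; apply: ler_wsqrtr.
rewrite sqD -(N_sqr x) -(N_sqr y); nra.
Qed.

Lemma NZ a x : N (a *: x) = `|a| * N x.
Proof. by rewrite /N sqZ sqrtrM ?sqr_ge0 // sqrtr_sqr. Qed.

Lemma NN x : N (- x) = N x.
Proof. by rewrite -scaleN1r NZ normrN1 mul1r. Qed.

Lemma N0 : N (0 : 'rV[R]_d) = 0.
Proof. by rewrite /N /sq dot0l sqrtr0. Qed.

Lemma N_sum (I : Type) (s : seq I) (F : I -> 'rV_d) :
  N (\sum_(i <- s) F i) <= \sum_(i <- s) N (F i).
Proof.
elim: s => [|a s IH]; first by rewrite !big_nil N0.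
rewrite !big_cons; apply: le_trans (N_triangle _ _) _; exact: lerD.
Qed.

Lemma distN x (s : seq 'rV[R]_d) : dist x s = N (resid x (mx_of s)).
Proof. by rewrite distE eucl_normE. Qed.

End Norm.

Section Vol.
Variable d : nat.

Definition gram m (M : 'M[R]_(m, d)) := M *m M^T.

Lemma mulmxT_entry m p (X : 'M[R]_(m, d)) (Y : 'M[R]_(p, d)) a b :
  (X *m Y^T) a b = dot (row a X) (row b Y).
Proof. by rewrite dotE mxE; apply: eq_bigr => k _; rewrite !mxE. Qed.

Lemma row'_col'_mulT n (X Y : 'M[R]_(n.+1, d)) j :
  row' j (col' j (X *m Y^T)) = row' j X *m (row' j Y)^T.
Proof. by apply/matrixP => a b; rewrite !mxE; apply: eq_bigr => k _; rewrite !mxE. Qed.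

Lemma sign_jj n (j : 'I_n) : (-1) ^+ (j + j) = 1 :> R.
Proof. by rewrite -signr_odd addnn odd_double expr0. Qed.

Lemma row_lift_sub n (M : 'M[R]_(n.+1, d)) j b : b != j -> (row b M <= row' j M)%MS.
Proof.
move=> bj; case: (unliftP j b) bj => [i ->|->]; last by rewrite eqxx.
move=> _; apply: (eq_row_sub i); apply/rowP => k; rewrite !mxE //.
Qed.

Lemma lift_neqj n (j : 'I_n.+1) a : (lift j a == j) = false.
Proof. by apply/negbTE; rewrite eq_sym neq_lift. Qed.

Lemma vol n (M : 'M[R]_(n.+1, d)) j :
  \det (gram M) = sq (resid (row j M) (row' j M)) * \det (gram (row' j M)).
Proof.
set A := row' j M; set x := row j M; set r := resid x A.
have [w xr] := submxP (resid_sub x A).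
set w' := w *m row' j (1%:M : 'M[R]_n.+1).
have w'M : w' *m M = x - r.
  rewrite /w' -mulmxA xr; congr (w *m _); apply/matrixP => a k.
  rewrite !mxE; rewrite (bigD1 (lift j a)) //= big1 ?addr0; first by rewrite !mxE eqxx mul1r.
  by move=> b /negPf nb; rewrite !mxE eq_sym nb mul0r.
have w'j : w' 0 j = 0.
  rewrite mxE big1 // => i _; rewrite !mxE.
  by rewrite eq_sym (negPf (neq_lift j i)) mulr0.
set c : 'cV[R]_n.+1 := \col_a ((a == j)%:R).
set E := 1%:M - c *m w'.
have detE : \det E = 1.
  rewrite (expand_det_col E j) (bigD1 j) //= big1 ?addr0.
    rewrite /cofactor sign_jj mul1r !mxE big_ord1 w'j mulr0 subr0 eqxx mul1r.
    have -> : row' j (col' j E) = 1%:M.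
      apply/matrixP => a b; rewrite !mxE big_ord1 !mxE lift_neqj mul0r subr0.
      by rewrite (inj_eq (@lift_inj _ j)).
    exact: det1.
  move=> a aj; rewrite !mxE big_ord1 w'j mulr0 subr0 (negPf aj) mul0r //.
set M' := E *m M.
have M'E : M' = M - c *m (x - r) by rewrite /M' /E mulmxBl mul1mx -mulmxA w'M.
have rowjM' : row j M' = r.
  apply/rowP => k; rewrite M'E !mxE big_ord1 !mxE eqxx mul1r.
  by rewrite (zmod_id3 (M j k)).
have row'M' : row' j M' = A.
  apply/matrixP => a k; rewrite M'E !mxE big_ord1 !mxE.
  by rewrite lift_neqj mul0r subr0.
have gramE : \det (gram M') = \det (gram M).
  rewrite /gram /M' trmx_mul mulmxA -[E *m M *m M^T]mulmxA !det_mulmx det_tr detE.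
  by rewrite mul1r mulr1.
rewrite -gramE (expand_det_row _ j) (bigD1 j) //= big1 ?addr0.
  rewrite /cofactor sign_jj mul1r /gram mulmxT_entry rowjM' row'_col'_mulT row'M'.
  by [].
move=> b bj; rewrite /gram mulmxT_entry rowjM' resid_dot ?mul0r //.
rewrite -row'M'; apply: row_lift_sub bj.
Qed.

Lemma gram_det_ge0 m (M : 'M[R]_(m, d)) : 0 <= \det (gram M).
Proof.
elim: m M => [|m IH] M; first by rewrite det_mx00.
by rewrite (vol M ord0) mulr_ge0 ?sq_ge0 ?IH.
Qed.

End Vol.

Section Spans.
Variable d : nat.
Implicit Types x y u v r : 'rV[R]_d.

Lemma row_mx_of (s : seq 'rV[R]_d) (i : 'I_(size s)) : row i (mx_of s) = nth 0 s i.
Proof. by apply/rowP => k; rewrite !mxE. Qed.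

Lemma mem_mx_of (s : seq 'rV[R]_d) x : x \in s -> (x <= mx_of s)%MS.
Proof.
move=> xs; have hi : (index x s < size s)%N by rewrite index_mem.
apply: (eq_row_sub (Ordinal hi)); by rewrite row_mx_of /= nth_index.
Qed.

Lemma mx_of_sub m (s : seq 'rV[R]_d) (B : 'M_(m, d)) :
  (forall x, x \in s -> (x <= B)%MS) -> (mx_of s <= B)%MS.
Proof. by move=> H; apply/row_subP => i; rewrite row_mx_of; apply/H/mem_nth. Qed.

Lemma orth_mx_of (s : seq 'rV[R]_d) r :
  (forall x, x \in s -> dot r x = 0) -> r *m (mx_of s)^T = 0.
Proof.
move=> H; apply/rowP => i; rewrite mulmxT_entry !mxE row_mx_of.
have -> : row 0 r = r by apply/rowP => k; rewrite !mxE.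
exact/H/mem_nth.
Qed.

Lemma resid_nil x : resid x (mx_of [::]) = x.
Proof. by apply: resid_id; apply: orth_mx_of. Qed.

Lemma take_mem_S (s : seq 'rV[R]_d) i x : x \in take i s -> x \in take i.+1 s.
Proof.
case: (ltnP i (size s)) => [hi|hi]; first by rewrite (take_nth 0 hi) mem_rcons inE => ->; rewrite orbT.
by rewrite !take_oversize // (leq_trans hi).
Qed.

Lemma take_mem_le (s : seq 'rV[R]_d) i j x : (j <= i)%N -> x \in take j s -> x \in take i s.
Proof.
elim: i => [|i IH]; first by rewrite leqn0 => /eqP ->.
rewrite leq_eqVlt => /orP [/eqP -> //|]; rewrite ltnS => hj hx.
exact/take_mem_S/IH.
Qed.

Lemma mx_of_take_mono (s : seq 'rV[R]_d) i j : (j <= i)%N ->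
  (mx_of (take j s) <= mx_of (take i s))%MS.
Proof. by move=> hj; apply: mx_of_sub => x hx; apply/mem_mx_of/(take_mem_le hj). Qed.

Lemma nth_take_sub (s : seq 'rV[R]_d) i j : (j < i)%N -> (j < size s)%N ->
  (nth 0 s j <= mx_of (take i s))%MS.
Proof.
move=> ji js; apply: mem_mx_of; apply: (take_mem_le ji).
by rewrite (take_nth 0 js) mem_rcons mem_head.
Qed.

End Spans.

Section Greedy.
Variables (d n : nat) (G : seq 'rV[R]_d).
Hypothesis sG : size G = n.+1.

Let g i := nth 0 G i.
Let Gs i := mx_of (take i G).
Definition uu i := resid (nth 0 G i) (mx_of (take i G)).
Definition cc q j := dot (resid q (mx_of (take j G))) (uu j) / sq (uu j).

Lemma uu_sub j i : (j < i)%N -> (j < n.+1)%N -> (uu j <= mx_of (take i G))%MS.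
Proof.
move=> ji jk.
have -> : uu j = nth 0 G j - (nth 0 G j - uu j) by rewrite zmod_id3.
apply: submx_sub; first by apply: nth_take_sub; rewrite ?sG.
apply: submx_trans (resid_sub _ _) _; exact: mx_of_take_mono (ltnW ji).
Qed.

Lemma uu_orth i j : (i < n.+1)%N -> (j < n.+1)%N -> i != j -> dot (uu i) (uu j) = 0.
Proof.
wlog ji : i j / (j < i)%N.
  move=> W ik jk ij; case: (ltngtP j i) => h; first exact: W.
    by rewrite dotC W // eq_sym.
  by rewrite h eqxx in ij.
by move=> ik jk _; apply: resid_dot; apply: uu_sub.
Qed.

Lemma resid_step q j : (j < n.+1)%N ->
  resid q (mx_of (take j G)) = cc q j *: uu j + resid q (mx_of (take j.+1 G)).
Proof.
move=> jk; set r := resid q _.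
have -> : resid q (mx_of (take j.+1 G)) = r - cc q j *: uu j.
  symmetry; apply: resid_uniq.
    rewrite zmod_id4; apply: addmx_sub.
      apply: submx_trans (resid_sub _ _) _; exact: mx_of_take_mono.
    by apply: scalemx_sub; apply: uu_sub.
  have ortj : forall v, (v <= mx_of (take j G))%MS -> dot (r - cc q j *: uu j) v = 0.
    move=> v hv; rewrite dotBl dotZl /r !resid_dot // mulr0 subr0 //.
  apply: orth_mx_of => x; rewrite -sG in jk.
  rewrite (take_nth 0 jk) mem_rcons inE => /orP [/eqP ->|hx]; last exact/ortj/mem_mx_of.
  rewrite [nth 0 G j](zmod_id5 _ (uu j)).
  rewrite dotDr (ortj (nth 0 G j - uu j)) ?addr0; last exact: resid_sub.
  rewrite dotBl dotZl /cc.
  have [u0|un0] := eqVneq (sq (uu j)) 0.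
    by rewrite (sq_eq0 u0) !dot0r mulr0 subr0.
  by rewrite -/(sq (uu j)) /r divfK // subrr.
by rewrite addrC subrK.
Qed.

Lemma decomp q m : (m <= n.+1)%N ->
  q = \sum_(j < m) cc q j *: uu j + resid q (mx_of (take m G)).
Proof.
elim: m => [|m IH] hm; first by rewrite big_ord0 add0r take0 resid_nil.
rewrite big_ord_recr /= -addrA -resid_step //.
exact: IH (ltnW hm).
Qed.

End Greedy.

Lemma argmax_nat (f : nat -> R) m :
  exists2 t, (t < m.+1)%N & forall s, (s < m.+1)%N -> f s <= f t.
Proof.
elim: m => [|m [t ht Ht]].
  by exists 0%N => // s; rewrite ltnS leqn0 => /eqP ->.
have [le|lt] := leP (f t) (f m.+1).
  exists m.+1 => // s; rewrite ltnS leq_eqVlt => /orP [/eqP -> //|hs].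
  exact: le_trans (Ht s hs) le.
exists t; first exact: ltnW.
move=> s; rewrite ltnS leq_eqVlt => /orP [/eqP -> |hs]; first exact: ltW.
exact: Ht.
Qed.

Lemma sum_pow2 i : \sum_(j < i) (2 : R) ^+ j = 2 ^+ i - 1.
Proof.
elim: i => [|i IH]; first by rewrite big_ord0 expr0 subrr.
by rewrite big_ord_recr /= IH exprS; ring.
Qed.

Section DotSum.
Variable d : nat.
Lemma dot_suml (I : Type) (s : seq I) (F : I -> 'rV[R]_d) y :
  dot (\sum_(i <- s) F i) y = \sum_(i <- s) dot (F i) y.
Proof.
elim: s => [|a s IH]; first by rewrite !big_nil dot0l.
by rewrite !big_cons dotDl IH.
Qed.
Lemma dot_sumr (I : Type) (s : seq I) (F : I -> 'rV[R]_d) y :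
  dot y (\sum_(i <- s) F i) = \sum_(i <- s) dot y (F i).
Proof. by rewrite dotC dot_suml; apply: eq_bigr => i _; rewrite dotC. Qed.
End DotSum.

Section GreedyP.
Variables (d n : nat) (G P : seq 'rV[R]_d).
Hypothesis sG : size G = n.+1.
Hypothesis hG : forall i, (i < n.+1)%N -> nth 0 G i \in P /\
  forall q, q \in P -> dist q (take i G) <= dist (nth 0 G i) (take i G).

Lemma greedy_sq i q : (i < n.+1)%N -> q \in P ->
  sq (resid q (mx_of (take i G))) <= sq (uu G i).
Proof.
move=> hi hq; have [_ H] := hG hi; have := H q hq.
by rewrite !distN N_leE.
Qed.

Lemma cc_le1 q j : (j < n.+1)%N -> q \in P -> `|cc G q j| <= 1.
Proof.
move=> hj hq; rewrite /cc.
have [u0|un0] := eqVneq (sq (uu G j)) 0.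
  by rewrite u0 invr0 mulr0 normr0 ler01.
have hpos : 0 < sq (uu G j) by rewrite lt_def un0 sq_ge0.
rewrite normrM normfV (ger0_norm (sq_ge0 _)) ler_pdivrMr // mul1r.
apply: le_trans (dot_le _ _) _.
rewrite -N_sqr expr2; apply: ler_wpM2r; first exact: N_ge0.
by apply: N_le; apply: greedy_sq.
Qed.

Lemma uu_step i : (i < n)%N -> sq (uu G i.+1) <= sq (uu G i).
Proof.
move=> hi; apply: le_trans _ (greedy_sq (ltnW hi) (hG (i:=i.+1) hi).1).
by apply: sq_resid_mono; apply: mx_of_take_mono.
Qed.

Lemma uu_mono i j : (i <= j)%N -> (j <= n)%N -> sq (uu G j) <= sq (uu G i).
Proof.
elim: j => [|j IH]; first by rewrite leqn0 => /eqP ->.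
rewrite leq_eqVlt => /orP [/eqP -> //|]; rewrite ltnS => hij hj.
exact: le_trans (uu_step hj) (IH hij (ltnW hj)).
Qed.

Variable H : 'M[R]_(n, d).
Let NH x := N (resid x H).

Lemma NH_ge0 x : 0 <= NH x.
Proof. exact: N_ge0. Qed.

Lemma NH_sum (I : Type) (s : seq I) (F : I -> 'rV[R]_d) :
  NH (\sum_(i <- s) F i) <= \sum_(i <- s) NH (F i).
Proof. by rewrite /NH resid_sum; apply: N_sum. Qed.

Lemma NHZ a x : NH (a *: x) = `|a| * NH x.
Proof. by rewrite /NH residZ NZ. Qed.

Lemma NHD x y : NH (x + y) <= NH x + NH y.
Proof. by rewrite /NH residD; apply: N_triangle. Qed.

Lemma NHB x y : NH (x - y) <= NH x + NH y.
Proof. by rewrite /NH residB; apply: le_trans (N_triangle _ _) _; rewrite NN. Qed.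

Lemma NH_combo q m (B : nat -> R) : q \in P -> (m <= n.+1)%N ->
  (forall j, (j < m)%N -> NH (uu G j) <= B j) ->
  NH (\sum_(j < m) cc G q j *: uu G j) <= \sum_(j < m) B j.
Proof.
move=> hq hm hB; apply: le_trans; first exact: NH_sum.
apply: ler_sum => j _; rewrite NHZ.
apply: le_trans _ (hB j (ltn_ord j)).
rewrite -[X in _ <= X]mul1r; apply: ler_wpM2r; first exact: NH_ge0.
apply: cc_le1 hq; exact: leq_trans (ltn_ord j) hm.
Qed.

Lemma uu_bound (Mx : R) : (forall t, (t < n.+1)%N -> NH (nth 0 G t) <= Mx) ->
  forall i, (i < n.+1)%N -> NH (uu G i) <= 2 ^+ i * Mx.
Proof.
move=> hM; elim/ltn_ind => i IH hi.
have hgi : nth 0 G i \in P := (hG hi).1.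
have dec := decomp sG (nth 0 G i) (ltnW hi).
have -> : uu G i = nth 0 G i - \sum_(j < i) cc G (nth 0 G i) j *: uu G j.
  by rewrite {1}dec addrAC subrr add0r.
apply: le_trans (NHB _ _) _.
have h2 : NH (\sum_(j < i) cc G (nth 0 G i) j *: uu G j) <= \sum_(j < i) 2 ^+ j * Mx.
  apply: (NH_combo (B := fun j => 2 ^+ j * Mx)) => //; first exact: ltnW.
  move=> j hj; apply: IH => //; exact: ltn_trans hi.
rewrite -mulr_suml sum_pow2 in h2.
have := hM i hi; move: h2; set a := NH _; set b := NH _ => h2 h1.
have -> : 2 ^+ i * Mx = Mx + (2 ^+ i - 1) * Mx by ring.
exact: lerD.
Qed.

Lemma claimB (Mx : R) : (forall t, (t < n.+1)%N -> NH (nth 0 G t) <= Mx) ->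
  N (uu G n) <= n.+1%:R * (2 ^+ n * Mx).
Proof.
move=> hM.
have Mx0 : 0 <= Mx by apply: le_trans (hM 0%N isT); apply: NH_ge0.
have hu : forall i, (i < n.+1)%N -> NH (uu G i) <= 2 ^+ n * Mx.
  move=> i hi; apply: le_trans (uu_bound hM hi) _; apply: ler_wpM2r => //.
  by apply: ler_weXn2l => //; lra.
set U : 'M[R]_(n.+1, d) := \matrix_(i < n.+1, k < d) (uu G i) 0 k.
have rowU : forall i : 'I_n.+1, row i U = uu G i by move=> i; apply/rowP => k; rewrite !mxE.
set K := kermx (U *m H^T).
have K0 : K != 0.
  rewrite -mxrank_eq0 mxrank_ker; have := rank_leq_col (U *m H^T).
  lia.
have [i0 hi0] : exists i0, row i0 K != 0.
  apply/existsP; apply: contraR K0 => /existsPn h; apply/eqP/row_matrixP => i.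
  by rewrite row0; apply/eqP; move: (h i); rewrite negbK.
set beta := row i0 K.
have hbeta : beta *m (U *m H^T) = 0 by rewrite /beta -row_mul mulmx_ker row0.
have [k0 hk0] : exists k0, beta 0 k0 != 0.
  apply/existsP; apply: contraR hi0 => /existsPn h; apply/eqP/rowP => k.
  by move: (h k); rewrite negbK mxE => /eqP ->; rewrite mxE.
have [t1 ht1 Ht1] := argmax_nat (fun i => `|beta 0 (inord i)|) n.
set i1 : 'I_n.+1 := inord t1.
set b := `|beta 0 i1|.
have hb : forall i : 'I_n.+1, `|beta 0 i| <= b.
  by move=> i; have := Ht1 i (ltn_ord i); rewrite /= inord_val.
have b0 : 0 < b by apply: lt_le_trans (hb k0); rewrite normr_gt0.
set v := beta *m U.
have vE : v = \sum_i beta 0 i *: uu G i by rewrite /v mulmx_sum_row; apply: eq_bigr => i _; rewrite rowU.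
have vH : resid v H = v by apply: resid_id; rewrite /v -mulmxA hbeta.
have sqv : sq v = \sum_i beta 0 i ^+ 2 * sq (uu G i).
  rewrite /sq vE dot_suml; apply: eq_bigr => i _.
  rewrite dotZl dot_sumr (bigD1 i) //= big1 ?addr0.
    by rewrite dotZr mulrA expr2.
  by move=> j ji; rewrite dotZr (uu_orth sG) ?mulr0 // eq_sym.
have low : N (b *: uu G n) <= N v.
  rewrite N_leE sqZ sqv (bigD1 i1) //= -[X in X <= _]addr0.
  apply: lerD; last by apply: sumr_ge0 => i _; rewrite mulr_ge0 ?sqr_ge0 ?sq_ge0.
  apply: ler_pM; rewrite ?sqr_ge0 ?sq_ge0 //.
    by rewrite /b real_normK // num_real.
  by apply: (uu_mono (i:=i1)) => //; exact: (ltn_ord i1).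
have up : N v <= n.+1%:R * (b * (2 ^+ n * Mx)).
  rewrite -vH -/(NH v) vE; apply: le_trans; first exact: NH_sum.
  have -> : n.+1%:R * (b * (2 ^+ n * Mx)) = \sum_(i < n.+1) (b * (2 ^+ n * Mx)).
    by rewrite sumr_const card_ord mulr_natl.
  apply: ler_sum => i _.
  rewrite NHZ; apply: ler_pM; rewrite ?normr_ge0 ?NH_ge0 //.
  exact: hu.
rewrite NZ (ger0_norm (ltW b0)) in low.
have := le_trans low up; rewrite mulrCA ler_pM2l //.
Qed.

Lemma lemmaL q : q \in P -> exists2 t, (t < n.+1)%N &
  NH q <= (n.+2)%:R * 2 ^+ n.+1 * NH (nth 0 G t).
Proof.
move=> hq.
have [t ht Ht] := argmax_nat (fun t => NH (nth 0 G t)) n.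
exists t => //; set Mx := NH (nth 0 G t).
have Mx0 : 0 <= Mx := NH_ge0 _.
have dec := decomp sG q (leqnn n.+1).
set r := resid q (mx_of (take n.+1 G)) in dec.
have h1 : NH (\sum_(j < n.+1) cc G q j *: uu G j) <= \sum_(j < n.+1) 2 ^+ j * Mx.
  apply: (NH_combo (B := fun j => 2 ^+ j * Mx)) => // j hj.
  exact: uu_bound.
rewrite -mulr_suml sum_pow2 in h1.
have h2 : NH r <= n.+1%:R * (2 ^+ n * Mx).
  apply: le_trans (claimB Ht).
  apply: le_trans (N_le (sq_resid_le_x _ _)) _.
  apply: N_le; apply: le_trans (greedy_sq (leqnn n.+1) hq).
  apply: sq_resid_mono; exact: mx_of_take_mono.
rewrite dec; apply: le_trans (NHD _ _) _.
have e2 : 0 <= 2 ^+ n :> R by apply: exprn_ge0.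
move: (lerD h1 h2); rewrite exprS => h3; apply: le_trans h3 _.
rewrite -[n.+2]addn1 -[n.+1]addn1 !natrD.
have hn : 0 <= n%:R :> R by [].
have := mulr_ge0 (mulr_ge0 hn e2) Mx0; have := mulr_ge0 e2 Mx0; nra.
Qed.

End GreedyP.

Lemma bigmax_ge (I : eqType) (r : seq I) (P : pred I) (F : I -> R) i0 :
  i0 \in r -> P i0 -> F i0 <= \big[Num.max/0]_(i <- r | P i) F i.
Proof.
elim: r => [//|a r IH]; rewrite inE big_cons => /orP [/eqP <-|hi] hP.
  by rewrite hP le_max lexx.
case: (P a); last exact: IH.
by rewrite le_max IH ?orbT.
Qed.

Lemma bigmax_le (I : Type) (r : seq I) (P : pred I) (F : I -> R) X :
  0 <= X -> (forall i, P i -> F i <= X) -> \big[Num.max/0]_(i <- r | P i) F i <= X.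
Proof.
move=> X0 H; elim/big_ind: _ => // x y hx hy.
by rewrite ge_max hx hy.
Qed.

Section Maxdet.
Variables (d k : nat).

Lemma maxdet_ge0 (U : seq 'rV[R]_d) : 0 <= MAXDET k U.
Proof.
rewrite /MAXDET; elim/big_ind: _ => [//|x y hx hy|f _].
  by rewrite le_max hx.
exact: gram_det_ge0.
Qed.

Lemma maxdet_le (U : seq 'rV[R]_d) X : 0 <= X ->
  (forall M : 'M[R]_(k, d), (forall a, row a M \in U) -> \det (gram M) <= X) ->
  MAXDET k U <= X.
Proof.
move=> X0 H; rewrite /MAXDET; apply: bigmax_le => // f _.
apply: (H (\matrix_(i < k, j < d) (nth 0 (undup U) (f i)) 0 j)) => a.
have -> : row a (\matrix_(i < k, j < d) (nth 0 (undup U) (f i)) 0 j) = nth 0 (undup U) (f a).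
  by apply/rowP => j; rewrite !mxE.
by rewrite -mem_undup mem_nth.
Qed.

Lemma maxdet_ge (U : seq 'rV[R]_d) (M : 'M[R]_(k, d)) :
  (forall a, row a M \in U) -> \det (gram M) <= MAXDET k U.
Proof.
move=> hU.
have [dist_rows|] := boolP [forall a, forall b, (a != b) ==> (row a M != row b M)]; last first.
  move/forallPn => [a /forallPn [b]]; rewrite negb_imply negbK => /andP [ab /eqP rab].
  suff -> : \det (gram M) = 0 by apply: maxdet_ge0.
  apply: (determinant_alternate ab) => j.
  by rewrite /gram !mulmxT_entry rab.
have hidx : forall a, (index (row a M) (undup U) < size (undup U))%N.
  by move=> a; rewrite index_mem mem_undup.
pose f := [ffun a => (Ordinal (hidx a) : 'I_(size (undup U)))].
have finj : injectiveb f.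
  apply/injectiveP => a b; rewrite !ffunE => -[] hab.
  have ra : row a M \in undup U by rewrite mem_undup.
  have rb : row b M \in undup U by rewrite mem_undup.
  have rab : row a M = row b M by rewrite -(nth_index 0 ra) hab nth_index.
  apply/eqP; apply: contraT => nab.
  move/forallP: dist_rows => /(_ a) /forallP /(_ b); rewrite nab /= rab.
  by rewrite eqxx.
rewrite /MAXDET; apply: le_trans (bigmax_ge _ (mem_index_enum f) finj).
have -> : (\matrix_(i < k, j < d) (nth 0 (undup U) (f i)) 0 j) = M.
  apply/matrixP => a j; rewrite !mxE ffunE /= nth_index ?mxE // mem_undup //.
by [].
Qed.

End Maxdet.

Section Main.
Variables (d n : nat) (c : seq 'rV[R]_d -> seq 'rV[R]_d).
Hypothesis hc : forall P, is_greedy P n.+1 (c P).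
Variables (U U' : seq 'rV[R]_d).
Hypothesis hUU : forall x, x \in U -> exists P, x \in P /\ (forall y, y \in c P -> y \in U').

Definition beta : R := (n.+2)%:R * 2 ^+ n.+1.

Lemma beta_ge0 : 0 <= beta.
Proof. by rewrite /beta mulr_ge0 // exprn_ge0. Qed.

Lemma greedy_L P x (H : 'M[R]_(n, d)) : x \in P ->
  exists2 g, g \in c P & N (resid x H) <= beta * N (resid g H).
Proof.
move=> hx; have [sz hg] := hc P.
have sG : size (c P) = n.+1 by rewrite sz; case: (P) hx.
have hG : forall i, (i < n.+1)%N -> nth 0 (c P) i \in P /\
    forall q, q \in P -> dist q (take i (c P)) <= dist (nth 0 (c P) i) (take i (c P)).
  by move=> i hi; apply: hg; rewrite sG.
have [t ht Ht] := lemmaL sG hG H hx.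
exists (nth 0 (c P) t); first by rewrite mem_nth // sG.
exact: Ht.
Qed.

Lemma repl (M : 'M[R]_(n.+1, d)) : (forall a, row a M \in U) ->
  forall p, (p <= n.+1)%N -> exists M' : 'M[R]_(n.+1, d),
    [/\ forall a : 'I_n.+1, (a < p)%N -> row a M' \in U',
        forall a : 'I_n.+1, (p <= a)%N -> row a M' = row a M &
        \det (gram M) <= beta ^+ (2 * p) * \det (gram M')].
Proof.
move=> hM; elim=> [|p IH] hp.
  exists M; split => //; by rewrite muln0 expr0 mul1r.
have [M' [h1 h2 h3]] := IH (ltnW hp).
set a0 : 'I_n.+1 := Ordinal hp.
have xU : row a0 M' \in U by rewrite h2 //.
have [P [xP hPU]] := hUU xU.
set H := row' a0 M'.
have [g gc hg] := greedy_L H xP.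
set M'' : 'M[R]_(n.+1, d) := \matrix_(a, j) if a == a0 then g 0 j else M' a j.
have rowM'' : forall a, row a M'' = if a == a0 then g else row a M'.
  by move=> a; apply/rowP => j; rewrite !mxE; case: (a == a0); rewrite ?mxE.
have row'M'' : row' a0 M'' = H.
  by apply/matrixP => a j; rewrite !mxE lift_neqj.
exists M''; split.
- move=> a ha; rewrite rowM''; case: eqP => [_|na]; first exact: hPU.
  apply: h1; rewrite ltn_neqAle -ltnS ha andbT.
  by apply/eqP => e; apply: na; apply: val_inj.
- move=> a ha; rewrite rowM''; case: eqP => [e|_]; last by apply: h2; exact: ltnW.
  by move: ha; rewrite e /= ltnn.
have e1 := vol M' a0; have e2 := vol M'' a0.
rewrite row'M'' rowM'' eqxx -/H in e2.
have hsq : sq (resid (row a0 M') H) <= beta ^+ 2 * sq (resid g H).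
  rewrite -!N_sqr -exprMn; apply: lerXn2r; rewrite ?nnegrE ?N_ge0 ?mulr_ge0 ?beta_ge0 ?N_ge0 ?exprn_ge0 //.
apply: le_trans h3 _.
rewrite mulnS exprD [beta ^+ 2 * _]mulrC -mulrA ler_wpM2l ?exprn_ge0 ?beta_ge0 //.
by rewrite e1 e2 mulrA; apply: ler_wpM2r; first exact: gram_det_ge0.
Qed.

End Main.

Theorem theorem1p1 :
  exists A C : R, 0 < A /\ 0 < C /\
  forall (d k : nat), (1 <= k <= d)%N ->
  forall c : seq 'rV[R]_d -> seq 'rV[R]_d,
    (forall P, is_greedy P k (c P)) ->
    (forall P, (size (undup (c P)) <= k)%N) /\
    (forall (m : nat) (Ps : 'I_m -> seq 'rV[R]_d), (1 <= m)%N ->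
       MAXDET k (flatten [seq c (Ps i) | i <- enum 'I_m]) >=
       (A * C ^+ (k ^ 2)%N)^-1 * MAXDET k (flatten [seq Ps i | i <- enum 'I_m])).
Proof.
exists 1, 16; split; first exact: ltr01.
split; first by [].
move=> d [//|n] hk c hc; split.
  move=> P; apply: leq_trans (size_undup _) _.
  have [sz _] := hc P; rewrite sz; by case: (P).
move=> m Ps hm.
set U := flatten _; set U' := flatten _.
have hUU : forall x, x \in U -> exists P, x \in P /\ (forall y, y \in c P -> y \in U').
  move=> x /flattenP [s /mapP [i hi ->] hx]; exists (Ps i); split => // y hy.
  by apply/flattenP; exists (c (Ps i)) => //; apply/mapP; exists i.
have C0 : 0 < 1 * 16 ^+ (n.+1 ^ 2)%N :> R by rewrite mul1r exprn_gt0.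
rewrite ler_pdivrMl //.
apply: maxdet_le; first by apply: mulr_ge0; [exact: ltW | exact: maxdet_ge0].
move=> M hM.
have [M' [h1 _ h3]] := repl hc hUU hM (leqnn n.+1).
have hM' : forall a, row a M' \in U' by move=> a; apply: h1.
apply: le_trans h3 _.
apply: ler_pM; first by apply: exprn_ge0; apply: beta_ge0.
  exact: gram_det_ge0.
  have hb : beta n <= 4 ^+ n.+1.
    rewrite /beta.
    have -> : (4 : R) ^+ n.+1 = 2 ^+ n.+1 * 2 ^+ n.+1 by rewrite -exprMn; congr (_ ^+ _); lra.
    apply: ler_wpM2r; first by apply: exprn_ge0.
    have := ltn_expl n.+1 (isT : (1 < 2)%N) => hl.
    rewrite -natrX ler_nat; exact: hl.
  apply: le_trans (lerXn2r _ _ _ hb) _; rewrite ?nnegrE ?beta_ge0 ?exprn_ge0 //.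
  rewrite mul1r -exprM.
  have -> : (16 : R) = 4 ^+ 2 by lra.
  by rewrite -exprM; rewrite le_eqVlt; apply/orP; left; apply/eqP; congr (_ ^+ _); lia.
exact: maxdet_ge.
Qed.
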